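(* For every graph $G$, $f^-(G+K_1)=f^-(G)$ and $f^+(G+K_1)=f^+(G)$.
   Context: All graphs are finite, simple, undirected and connected. $N[v]=N(v)\cup\{v\}$ is the closed neighbourhood. A chromatic colouring of $G$ is a proper vertex colouring $c:V(G)\to\{c_1,\dots,c_{\chi(G)}\}$. With respect to $c$, a vertex $v$ yields a rainbow neighbourhood if $N[v]$ contains a vertex of each colour $c_1,\dots,c_{\chi(G)}$; $r_\chi(G)$ is the number of such vertices, and $r^-_\chi(G)$, $r^+_\chi(G)$ are its minimum and maximum over all chromatic colourings of $G$. Fading: for a set $F\subseteq V(G)$ (a fade set), the vertices of $F$ receive a transparent colour $c^\circ$ not among $c_1,\dots,c_{\chi(G)}$; after fading, $v$ yields a rainbow neighbourhood iff for every $i$ some vertex of $N[v]\setminus F$ has colour $c_i$. The fading number $f^-(G)$ is the maximum $|F|$ over chromatic colourings $c$ attaining $r_\chi=r^-_\chi(G)$ and fade sets $F$ such that, after fading $F$, the number of vertices yielding rainbow neighbourhoods is still $r^-_\chi(G)$; $f^+(G)$ is defined analogously with $r^+_\chi(G)$. The join $G_1+G_2$ of vertex-disjoint graphs is $G_1\cup G_2$ together with all edges joining a vertex of $G_1$ to a vertex of $G_2$. *)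

(* Defs.v *)
From mathcomp Require Import all_boot.
Set Implicit Arguments. Unset Strict Implicit. Unset Printing Implicit Defensive.

Section Graphs.
Variable T : finType.
Variable e : rel T.

Definition simple_graph : Prop := symmetric e /\ irreflexive e.
Definition connected_graph : Prop := forall x y : T, connect e x y.

Definition closed_nbhd (v : T) : {set T} := [set u | (u == v) || e v u].

Definition proper (k : nat) (c : {ffun T -> 'I_k}) : bool :=
  [forall x, forall y, e x y ==> (c x != c y)].

(* chromatic number: least k admitting a proper k-colouring
   (#|T| colours always suffice for an irreflexive relation) *)
Definition chi : nat :=
  \big[minn/#|T|]_(k < #|T|.+1 | [exists c : {ffun T -> 'I_k}, proper c]) (k : nat).

Definition chromatic (c : {ffun T -> 'I_chi}) : bool := proper c.

Definition rainbow (c : {ffun T -> 'I_chi}) (F : {set T}) (v : T) : bool :=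
  [forall i : 'I_chi, exists u, [&& u \in closed_nbhd v, u \notin F & c u == i]].

Definition rcount (c : {ffun T -> 'I_chi}) (F : {set T}) : nat :=
  #|[set v | rainbow c F v]|.

Definition r_minus : nat :=
  \big[minn/#|T|]_(c | chromatic c) rcount c set0.
Definition r_plus : nat :=
  \max_(c | chromatic c) rcount c set0.

Definition f_minus : nat :=
  \max_(c | chromatic c && (rcount c set0 == r_minus))
     \max_(F : {set T} | rcount c F == r_minus) #|F|.
Definition f_plus : nat :=
  \max_(c | chromatic c && (rcount c set0 == r_plus))
     \max_(F : {set T} | rcount c F == r_plus) #|F|.
End Graphs.

(* the join G + K_1: new vertex None adjacent to every vertex of G *)
Definition join_K1 (T : finType) (e : rel T) : rel (option T) :=
  fun x y => match x, y with
             | Some a, Some b => e a b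
             | None, Some _ | Some _, None => true
             | None, None => false
             end.

(* Main.v *)
Require Import Defs.
From mathcomp Require Import all_boot zify.
Set Implicit Arguments. Unset Strict Implicit. Unset Printing Implicit Defensive.
Definition rb (T : finType) (e : rel T) k (c : {ffun T -> 'I_k}) (F : {set T}) (v : T) : bool :=
  [forall i : 'I_k, exists u, [&& u \in closed_nbhd e v, u \notin F & c u == i]].
Definition rcnt (T : finType) (e : rel T) k (c : {ffun T -> 'I_k}) (F : {set T}) : nat :=
  #|[set v | rb e c F v]|.
Definition rmin (T : finType) (e : rel T) k : nat :=
  \big[minn/#|T|]_(c : {ffun T -> 'I_k} | Defs.proper e c) rcnt e c set0.
Definition rmax (T : finType) (e : rel T) k : nat :=
  \max_(c : {ffun T -> 'I_k} | Defs.proper e c) rcnt e c set0.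
Definition fgen (T : finType) (e : rel T) k r : nat :=
  \max_(c : {ffun T -> 'I_k} | Defs.proper e c && (rcnt e c set0 == r))
     \max_(F : {set T} | rcnt e c F == r) #|F|.
Lemma fm_eq (T : finType) (e : rel T) : f_minus e = fgen e (chi e) (rmin e (chi e)).
Proof. reflexivity. Qed.
Lemma fp_eq (T : finType) (e : rel T) : f_plus e = fgen e (chi e) (rmax e (chi e)).
Proof. reflexivity. Qed.

Lemma bigmin_le (I : eqType) (r : seq I) (P : pred I) (F : I -> nat) x i :
  i \in r -> P i -> \big[minn/x]_(j <- r | P j) F j <= F i.
Proof.
elim: r => [|a r IH] //=; rewrite inE big_cons.
case/orP=> [/eqP <- -> | ir Pi]; first exact: geq_minl.
case: (P a); last exact: IH.
by rewrite geq_min IH ?orbT.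
Qed.



Lemma chi_min (T : finType) (e : rel T) k (c : {ffun T -> 'I_k}) :
  Defs.proper e c -> chi e <= k.
Proof.
move=> pc; rewrite /chi.
case: (leqP k #|T|) => hk.
  have hi : k < #|T|.+1 by [].
  pose i := Ordinal hi.
  apply: (@leq_trans (nat_of_ord i)) => //.
  apply: bigmin_le; first by rewrite mem_index_enum.
  by apply/existsP; exists c.
apply: (@leq_trans #|T|); last exact: ltnW.
apply: (big_ind (fun m => m <= #|T|)) => //.
- by move=> x y hx _; rewrite geq_min hx.
- by move=> i _; rewrite -ltnS.
Qed.

Lemma chi_proper (T : finType) (e : rel T) :
  irreflexive e -> exists c : {ffun T -> 'I_(chi e)}, Defs.proper e c.
Proof.
move=> irr; rewrite /chi.
apply: (big_ind (fun m => exists c : {ffun T -> 'I_m}, Defs.proper e c)).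
- exists [ffun x => enum_rank x].
  apply/forallP => x; apply/forallP => y; apply/implyP => exy.
  rewrite !ffunE; apply/negP => /eqP /enum_rank_inj exy'.
  by rewrite exy' irr in exy.
- move=> x y hx hy; case: (leqP x y) => h.
  + exact: hx.
  + exact: hy.
- by move=> i /existsP.
Qed.

Lemma chi_gt0 (T : finType) (e : rel T) :
  irreflexive e -> 0 < #|T| -> 0 < chi e.
Proof.
move=> irr; case/card_gt0P => x _.
case: (chi_proper irr) => c _.
exact: (leq_ltn_trans (leq0n _) (ltn_ord (c x))).
Qed.

Lemma prop_join (T : finType) (e : rel T) n (c' : {ffun option T -> 'I_n})
  (c : {ffun T -> 'I_n.-1}) :
  (forall x, c' (Some x) = lift (c' None) (c x)) ->
  Defs.proper (join_K1 e) c' = Defs.proper e c.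
Proof.
move=> Hc; apply/forallP/forallP => H x.
- apply/forallP => y; apply/implyP => exy.
  move: (forallP (H (Some x)) (Some y)); rewrite /= exy /= !Hc.
  by apply: contra => /eqP ->.
- apply/forallP => y; apply/implyP.
  case: x y => [x|] [y|] //= => [exy|_|_].
  + rewrite !Hc; apply: contra (implyP (forallP (H x) y) exy) => /eqP.
    by move/lift_inj ->.
  + by rewrite Hc eq_sym neq_lift.
  + by rewrite Hc neq_lift.
Qed.

Lemma rb_Fnone (T : finType) (e : rel T) n (c' : {ffun option T -> 'I_n})
  (c : {ffun T -> 'I_n.-1}) (F' : {set option T}) v :
  (forall x, c' (Some x) = lift (c' None) (c x)) -> None \in F' ->
  rb (join_K1 e) c' F' v = false.
Proof.
move=> Hc NF; apply/negP => /forallP /(_ (c' None)) /existsP [[u|]].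
- by rewrite Hc eq_sym (negbTE (neq_lift _ _)) !andbF.
- by rewrite NF andbF.
Qed.

Lemma rb_some (T : finType) (e : rel T) n (c' : {ffun option T -> 'I_n})
  (c : {ffun T -> 'I_n.-1}) (F' : {set option T}) v :
  (forall x, c' (Some x) = lift (c' None) (c x)) -> None \notin F' ->
  rb (join_K1 e) c' F' (Some v) = rb e c [set x | Some x \in F'] v.
Proof.
move=> Hc NF; apply/forallP/forallP => H i.
- case/existsP: (H (lift (c' None) i)) => [[u|]].
  + rewrite Hc /closed_nbhd !inE /= => /and3P [hu hF /eqP /lift_inj hi].
    apply/existsP; exists u; rewrite !inE hF hi eqxx andbT.
    by case/orP: hu => [/eqP [->]|->]; rewrite ?eqxx ?orbT.
  + by rewrite (negbTE (neq_lift _ _)) !andbF.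
- case: (unliftP (c' None) i) => [j ->| ->].
  + case/existsP: (H j) => u; rewrite /closed_nbhd !inE => /and3P [hu hF /eqP hj].
    apply/existsP; exists (Some u); rewrite !inE hF Hc hj eqxx andbT /=.
    by case/orP: hu => [/eqP->|->]; rewrite ?eqxx ?orbT.
  + by apply/existsP; exists None; rewrite /closed_nbhd !inE /= NF eqxx.
Qed.

Lemma rb_none (T : finType) (e : rel T) n (c' : {ffun option T -> 'I_n})
  (c : {ffun T -> 'I_n.-1}) (F' : {set option T}) :
  (forall x, c' (Some x) = lift (c' None) (c x)) -> None \notin F' ->
  rb (join_K1 e) c' F' None = [forall j : 'I_n.-1, exists x, (Some x \notin F') && (c x == j)].
Proof.
move=> Hc NF; apply/forallP/forallP => H i.
- case/existsP: (H (lift (c' None) i)) => [[u|]].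
  + rewrite Hc /closed_nbhd !inE /= => /andP [hF /eqP /lift_inj hi].
    by apply/existsP; exists u; rewrite hF hi eqxx.
  + by rewrite (negbTE (neq_lift _ _)) !andbF.
- case: (unliftP (c' None) i) => [j ->| ->].
  + case/existsP: (H j) => u /andP [hF /eqP hj].
    by apply/existsP; exists (Some u); rewrite /closed_nbhd !inE /= Hc hj eqxx hF.
  + by apply/existsP; exists None; rewrite /closed_nbhd !inE /= NF eqxx.
Qed.

Lemma some_inj (T : Type) : injective (@Some T).
Proof. by move=> x y []. Qed.

Lemma rcnt_join (T : finType) (e : rel T) n (c' : {ffun option T -> 'I_n})
  (c : {ffun T -> 'I_n.-1}) (F' : {set option T}) :
  (forall x, c' (Some x) = lift (c' None) (c x)) -> None \notin F' ->
  rcnt (join_K1 e) c' F' = rcnt e c [set x | Some x \in F'] + rb (join_K1 e) c' F' None.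
Proof.
move=> Hc NF; rewrite /rcnt.
set S := [set v | rb e c _ v].
have E : [set v | rb (join_K1 e) c' F' v] =
   (if rb (join_K1 e) c' F' None then None |: [set Some x | x in S] else [set Some x | x in S]).
  apply/setP => [[x|]].
  - rewrite inE (rb_some _ _ Hc NF).
    case: (rb _ _ _ None); rewrite ?inE mem_imset ?inE //; exact: some_inj.
  - rewrite inE; case: (rb _ _ _ None); rewrite ?inE ?eqxx //.
    by apply/esym/negP => /imsetP [].
rewrite E; case: (rb _ _ _ None).
- rewrite cardsU1 card_imset ?addn1 ?add1n; last exact: some_inj.
  suff -> : None \notin [set Some x | x in S] by [].
  by apply/negP => /imsetP [].
- by rewrite card_imset ?addn0; last exact: some_inj.
Qed.

Lemma rcnt_join0 (T : finType) (e : rel T) n (c' : {ffun option T -> 'I_n})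
  (c : {ffun T -> 'I_n.-1}) (F' : {set option T}) :
  (forall x, c' (Some x) = lift (c' None) (c x)) -> None \in F' ->
  rcnt (join_K1 e) c' F' = 0.
Proof.
move=> Hc NF; rewrite /rcnt; apply/eqP; rewrite cards_eq0; apply/eqP/setP => v.
by rewrite !inE (rb_Fnone _ _ Hc NF).
Qed.

Lemma rb_imp (T : finType) (e : rel T) n (c' : {ffun option T -> 'I_n})
  (c : {ffun T -> 'I_n.-1}) (F' : {set option T}) v :
  (forall x, c' (Some x) = lift (c' None) (c x)) -> None \notin F' ->
  rb e c [set x | Some x \in F'] v -> rb (join_K1 e) c' F' None.
Proof.
move=> Hc NF H; rewrite (rb_none _ Hc NF); apply/forallP => j.
case/existsP: (forallP H j) => u /and3P [_ hF hj].
by apply/existsP; exists u; rewrite -(in_set (fun x => Some x \in F')) hF.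
Qed.

Lemma rcnt_join_pos (T : finType) (e : rel T) n (c' : {ffun option T -> 'I_n})
  (c : {ffun T -> 'I_n.-1}) (F' : {set option T}) :
  (forall x, c' (Some x) = lift (c' None) (c x)) -> None \notin F' ->
  0 < rcnt e c [set x | Some x \in F'] ->
  rcnt (join_K1 e) c' F' = (rcnt e c [set x | Some x \in F']).+1.
Proof.
move=> Hc NF; rewrite /rcnt => /card_gt0P [v]; rewrite inE => hv.
by rewrite -/(rcnt _ _ _) (rcnt_join _ Hc NF) (rb_imp Hc NF hv) addn1.
Qed.

Lemma rcnt_join_eq (T : finType) (e : rel T) n (c' : {ffun option T -> 'I_n})
  (c : {ffun T -> 'I_n.-1}) (F' : {set option T}) r :
  (forall x, c' (Some x) = lift (c' None) (c x)) ->
  rcnt (join_K1 e) c' F' = r.+1 ->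
  None \notin F' /\ rcnt e c [set x | Some x \in F'] = r.
Proof.
move=> Hc H.
have [NF|NF] := boolP (None \in F'); first by rewrite (rcnt_join0 _ Hc NF) in H.
split=> //.
case: (posnP (rcnt e c [set x | Some x \in F'])) => [z|p].
- move: H; rewrite (rcnt_join _ Hc NF) z add0n.
  by case: (rb _ _ _ None) => // [] [] <-.
- by move: H; rewrite (rcnt_join_pos Hc NF p) => [[]].
Qed.

Lemma ext_col (T : finType) k (c : {ffun T -> 'I_k}) :
  exists c' : {ffun option T -> 'I_k.+1}, forall x, c' (Some x) = lift (c' None) (c x).
Proof.
exists [ffun o => if o is Some x then lift ord_max (c x) else ord_max].
by move=> x; rewrite !ffunE.
Qed.

Lemma restr_col (T : finType) (e : rel T) n (c' : {ffun option T -> 'I_n}) (d : 'I_n.-1) :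
  Defs.proper (join_K1 e) c' ->
  exists c : {ffun T -> 'I_n.-1}, forall x, c' (Some x) = lift (c' None) (c x).
Proof.
move=> pc.
exists [ffun x => odflt d (unlift (c' None) (c' (Some x)))] => x; rewrite ffunE.
case: (unliftP (c' None) (c' (Some x))) => [j -> //| E].
by move: (implyP (forallP (forallP pc (Some x)) None) isT); rewrite E eqxx.
Qed.

Lemma rb_exists (T : finType) (e : rel T) k (c : {ffun T -> 'I_k}) :
  symmetric e -> Defs.proper e c -> 0 < #|T| ->
  (forall c2 : {ffun T -> 'I_k.-1}, ~~ Defs.proper e c2) ->
  exists v, rb e c set0 v.
Proof.
move=> sym pc /card_gt0P [x0 _] nop.
have [/existsP //|/existsPn nrb] := boolP [exists v, rb e c set0 v].
exfalso.
move: c pc nop nrb; case: k => [|k] c pc nop nrb; first by case: (c x0).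
pose top : 'I_k.+1 := ord_max.
pose m v := odflt top [pick j | [forall u, (u \in closed_nbhd e v) ==> (c u != j)]].
have mP v : forall u, u \in closed_nbhd e v -> c u != m v.
  rewrite /m; case: pickP => [j /forallP H u hu|H].
    exact: (implyP (H u) hu).
  exfalso; move: (nrb v); rewrite /rb => /negP; apply; apply/forallP => i.
  move: (H i) => /negbT /forallPn [u]; rewrite negb_imply negbK => /andP [hu /eqP hi].
  by apply/existsP; exists u; rewrite hu inE hi eqxx.
pose g v := if c v == top then m v else c v.
have vN v : v \in closed_nbhd e v by rewrite inE eqxx.
have gtop v : top != g v.
  rewrite /g; case: ifP => [/eqP hv|/negbT hv]; last by rewrite eq_sym.
  by rewrite -hv mP.
have gE x y : e x y -> g x != g y.
  move=> exy; have yN : y \in closed_nbhd e x by rewrite inE exy orbT.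
  have xN : x \in closed_nbhd e y by rewrite inE sym exy orbT.
  rewrite /g; case: (eqVneq (c x) top) => hx; case: (eqVneq (c y) top) => hy.
  - by move: (implyP (forallP (forallP pc x) y) exy); rewrite hx hy eqxx.
  - by rewrite eq_sym mP.
  - exact: mP.
  - exact: (implyP (forallP (forallP pc x) y) exy).
case: (unlift_some (gtop x0)) => d _ _.
pose c2 : {ffun T -> 'I_k} := [ffun v => odflt d (unlift top (g v))].
have c2E v : g v = lift top (c2 v).
  rewrite ffunE; case: (unlift_some (gtop v)) => j E1 E2.
  by rewrite E2 /= -E1.
move: (nop c2) => /negP; apply; apply/forallP => x; apply/forallP => y; apply/implyP => exy.
apply: contra (gE x y exy) => /eqP h; by rewrite !c2E h.
Qed.

Lemma preim0 (T : finType) : [set x | Some x \in (set0 : {set option T})] = set0.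
Proof. by apply/setP => x; rewrite !inE. Qed.

Lemma preim_im (T : finType) (F : {set T}) : [set x | Some x \in [set Some y | y in F]] = F.
Proof. apply/setP => x; rewrite inE mem_imset //; exact: some_inj. Qed.

Lemma none_im (T : finType) (F : {set T}) : None \notin [set Some y | y in F].
Proof. by apply/negP => /imsetP []. Qed.

Lemma im_preim (T : finType) (F' : {set option T}) : None \notin F' ->
  [set Some y | y in [set x | Some x \in F']] = F'.
Proof.
move=> NF; apply/setP => [[x|]].
- rewrite mem_imset ?inE //; exact: some_inj.
- by rewrite (negbTE NF) (negbTE (none_im _)).
Qed.


Lemma get_default (T : finType) (e : rel T) n (c' : {ffun option T -> 'I_n}) :
  Defs.proper (join_K1 e) c' -> 0 < #|T| -> exists d : 'I_n.-1, true.
Proof.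
move=> pc /card_gt0P [x0 _].
have h : c' None != c' (Some x0).
  by rewrite eq_sym (implyP (forallP (forallP pc (Some x0)) None) isT).
by case: (unlift_some h) => d _ _; exists d.
Qed.

Lemma R2 (T : finType) (e : rel T) k (c : {ffun T -> 'I_k}) :
  Defs.proper e c -> 0 < rcnt e c set0 ->
  exists c' : {ffun option T -> 'I_k.+1},
    Defs.proper (join_K1 e) c' /\ rcnt (join_K1 e) c' set0 = (rcnt e c set0).+1.
Proof.
move=> pc pos; case: (ext_col c) => c' Hc; exists c'; split.
  by rewrite (prop_join _ Hc).
have NF : None \notin (set0 : {set option T}) by rewrite inE.
by rewrite (rcnt_join_pos Hc NF) preim0 // preim0.
Qed.

Lemma R3 (T : finType) (e : rel T) k (c' : {ffun option T -> 'I_k.+1}) :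
  Defs.proper (join_K1 e) c' -> 0 < #|T| ->
  (forall c : {ffun T -> 'I_k}, Defs.proper e c -> 0 < rcnt e c set0) ->
  exists c : {ffun T -> 'I_k},
    Defs.proper e c /\ rcnt (join_K1 e) c' set0 = (rcnt e c set0).+1.
Proof.
move=> pc' T0 R1; case: (get_default pc' T0) => d _.
case: (restr_col d pc') => c Hc; exists c.
have pc : Defs.proper e c by rewrite -(prop_join _ Hc).
split=> //.
have NF : None \notin (set0 : {set option T}) by rewrite inE.
by rewrite (rcnt_join_pos Hc NF) preim0 // R1.
Qed.

Lemma rcnt_le (T : finType) (e : rel T) k (c : {ffun T -> 'I_k}) F : rcnt e c F <= #|T|.
Proof. exact: max_card. Qed.

Lemma rmin_join (T : finType) (e : rel T) k :
  0 < #|T| -> (exists c : {ffun T -> 'I_k}, Defs.proper e c) ->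
  (forall c : {ffun T -> 'I_k}, Defs.proper e c -> 0 < rcnt e c set0) ->
  rmin (join_K1 e) k.+1 = (rmin e k).+1.
Proof.
move=> T0 [c0 pc0] R1; apply/eqP; rewrite eqn_leq; apply/andP; split.
- set L := rmin (join_K1 e) k.+1; rewrite /rmin.
  apply: (big_ind (fun m => L <= m.+1)).
  + case: (R2 pc0 (R1 _ pc0)) => c' [pc' E].
    rewrite /L /rmin; apply: leq_trans (bigmin_le _ _ (mem_index_enum _) pc') _.
    by rewrite E ltnS rcnt_le.
  + move=> x y hx hy; case: (leqP x y) => h; [exact: hx | exact: hy].
  + move=> c pc; case: (R2 pc (R1 _ pc)) => c' [pc' E].
    rewrite /L /rmin; apply: leq_trans (bigmin_le _ _ (mem_index_enum _) pc') _.
    by rewrite E.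
- have hle : rmin e k <= #|T|.
    rewrite /rmin; apply: leq_trans (bigmin_le _ _ (mem_index_enum _) pc0) _.
    exact: rcnt_le.
  set L := rmin e k; rewrite /rmin.
  apply: (big_ind (fun m => L.+1 <= m)).
  + by rewrite card_option ltnS.
  + by move=> x y hx hy; rewrite leq_min hx hy.
  + move=> c' pc'; case: (R3 pc' T0 R1) => c [pc E].
    rewrite E ltnS.
    exact: (bigmin_le _ _ (mem_index_enum _) pc).
Qed.

Lemma rmax_join (T : finType) (e : rel T) k :
  0 < #|T| -> (exists c : {ffun T -> 'I_k}, Defs.proper e c) ->
  (forall c : {ffun T -> 'I_k}, Defs.proper e c -> 0 < rcnt e c set0) ->
  rmax (join_K1 e) k.+1 = (rmax e k).+1.
Proof.
move=> T0 [c0 pc0] R1; apply/eqP; rewrite eqn_leq; apply/andP; split.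
- apply/bigmax_leqP => c' pc'; case: (R3 pc' T0 R1) => c [pc E].
  by rewrite E ltnS (leq_bigmax_cond _ pc).
- have pos : 0 < rmax (join_K1 e) k.+1.
    case: (R2 pc0 (R1 _ pc0)) => c' [pc' E].
    by apply: leq_trans (leq_bigmax_cond _ pc'); rewrite E.
  suff : rmax e k <= (rmax (join_K1 e) k.+1).-1 by lia.
  apply/bigmax_leqP => c pc; case: (R2 pc (R1 _ pc)) => c' [pc' E].
  have H : rcnt (join_K1 e) c' set0 <= rmax (join_K1 e) k.+1 :=
    @leq_bigmax_cond _ (fun c => Defs.proper (join_K1 e) c) (fun c => rcnt (join_K1 e) c set0) c' pc'.
  lia.
Qed.

Lemma fgen_join (T : finType) (e : rel T) k r :
  0 < #|T| -> 0 < r ->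
  fgen (join_K1 e) k.+1 r.+1 = fgen e k r.
Proof.
move=> T0 r0; apply/eqP; rewrite eqn_leq; apply/andP; split.
- apply/bigmax_leqP => c' /andP [pc' /eqP h0]; apply/bigmax_leqP => F' /eqP hF'.
  case: (get_default pc' T0) => d _.
  case: (restr_col d pc') => c Hc.
  have pc : Defs.proper e c by rewrite -(prop_join _ Hc).
  case: (rcnt_join_eq Hc h0) => _; rewrite preim0 => hc0.
  case: (rcnt_join_eq Hc hF') => NF hcF.
  have cardE : #|F'| = #|[set x | Some x \in F']|.
    by rewrite -{1}(im_preim NF) card_imset //; exact: some_inj.
  rewrite cardE.
  have H1 : #|[set x | Some x \in F']| <= \max_(F : {set T} | rcnt e c F == r) #|F|.
    exact: (@leq_bigmax_cond _ (fun F => rcnt e c F == r) (fun F => #|F|) _ (introT eqP hcF)).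
  apply: leq_trans H1 _.
  have pcr : Defs.proper e c && (rcnt e c set0 == r) by rewrite pc hc0 eqxx.
  exact: (@leq_bigmax_cond _ (fun c => Defs.proper e c && (rcnt e c set0 == r))
            (fun c => \max_(F : {set T} | rcnt e c F == r) #|F|) _ pcr).
- apply/bigmax_leqP => c /andP [pc /eqP h0]; apply/bigmax_leqP => F /eqP hF.
  case: (ext_col c) => c' Hc.
  have pc' : Defs.proper (join_K1 e) c' by rewrite (prop_join _ Hc).
  have NF0 : None \notin (set0 : {set option T}) by rewrite inE.
  have h0' : rcnt (join_K1 e) c' set0 = r.+1.
    by rewrite (rcnt_join_pos Hc NF0) preim0 ?h0.
  have hF' : rcnt (join_K1 e) c' [set Some y | y in F] = r.+1.
    by rewrite (rcnt_join_pos Hc (none_im F)) preim_im ?hF.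
  have cardE : #|F| = #|[set Some y | y in F]|.
    by rewrite card_imset //; exact: some_inj.
  rewrite cardE.
  have H1 : #|[set Some y | y in F]| <= \max_(F' : {set option T} | rcnt (join_K1 e) c' F' == r.+1) #|F'|.
    exact: (@leq_bigmax_cond _ (fun F' => rcnt (join_K1 e) c' F' == r.+1) (fun F' => #|F'|) _ (introT eqP hF')).
  apply: leq_trans H1 _.
  have pcr : Defs.proper (join_K1 e) c' && (rcnt (join_K1 e) c' set0 == r.+1) by rewrite pc' h0' eqxx.
  exact: (@leq_bigmax_cond _ (fun c => Defs.proper (join_K1 e) c && (rcnt (join_K1 e) c set0 == r.+1))
            (fun c => \max_(F : {set option T} | rcnt (join_K1 e) c F == r.+1) #|F|) _ pcr).
Qed.

Lemma chi_join (T : finType) (e : rel T) :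
  irreflexive e -> 0 < #|T| -> chi (join_K1 e) = (chi e).+1.
Proof.
move=> irr T0; apply/eqP; rewrite eqn_leq; apply/andP; split.
- case: (chi_proper irr) => c pc; case: (ext_col c) => c' Hc.
  apply: (@chi_min _ _ _ c'); by rewrite (prop_join _ Hc).
- have irr' : irreflexive (join_K1 e) by case => [x|] //=; exact: irr.
  case: (chi_proper irr') => c' pc'.
  case: (get_default pc' T0) => d _.
  case: (restr_col d pc') => c Hc.
  have pc : Defs.proper e c by rewrite -(prop_join _ Hc).
  have := chi_min pc; have := ltn_ord (c' None); lia.
Qed.

Theorem lemma2p3 (T : finType) (e : rel T) :
  simple_graph e -> connected_graph e -> 0 < #|T| ->
  f_minus (join_K1 e) = f_minus e /\ f_plus (join_K1 e) = f_plus e.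
Proof.
move=> [sym irr] _ T0.
have ex := chi_proper irr.
have nop : forall c2 : {ffun T -> 'I_(chi e).-1}, ~~ Defs.proper e c2.
  move=> c2; apply/negP => /chi_min; have := chi_gt0 irr T0; lia.
have R1 : forall c : {ffun T -> 'I_(chi e)}, Defs.proper e c -> 0 < rcnt e c set0.
  move=> c pc; case: (rb_exists sym pc T0 nop) => v hv.
  by apply/card_gt0P; exists v; rewrite inE.
have rmin0 : 0 < rmin e (chi e).
  case: ex => c0 pc0; rewrite /rmin.
  apply: (big_ind (fun m => 0 < m)) => //.
  by move=> x y hx hy; rewrite leq_min hx hy.
have rmax0 : 0 < rmax e (chi e).
  case: ex => c0 pc0; apply: leq_trans (R1 _ pc0) _.
  exact: (@leq_bigmax_cond _ (fun c => Defs.proper e c) (fun c => rcnt e c set0) _ pc0).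
rewrite !fm_eq !fp_eq (chi_join irr T0) (rmin_join T0 ex R1) (rmax_join T0 ex R1).
by rewrite !fgen_join.
Qed.
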